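(* Consider the mixed-integer bilevel problem $$\min_{x,y}\ c_1^\top x+d_1^\top y\quad\text{s.t.}\quad A_1x+B_1y\le b_1,\qquad y\in\arg\min_{z}\{c_2^\top x+d_2^\top z:\ A_2x+B_2z\le b_2\},$$ with $x\in\mathbb{R}^{n_x}$, lower-level variables $z=(z_C,z_I)$ with $z_C\in\mathbb{R}^{n_{yC}}$ continuous and $z_I\in\{0,1\}^{n_{yI}}$ binary, $A_2\in\mathbb{R}^{m_2\times n_x}$, and $B_2=[B_{2C},B_{2I}]$ split by columns according to $(z_C,z_I)$. For a binary vector $\hat y_I\in\{0,1\}^{n_{yI}}$ and an index set $\mathcal{A}\subseteq\{1,\dots,m_2\}$ with $|\mathcal{A}|=n_{yC}$ such that the row-submatrix $B_{2C,\mathcal{A}}$ is invertible, define the affine map $$y_C^{\hat y_I,\mathcal{A}}(x)=B_{2C,\mathcal{A}}^{-1}\big(b_{2,\mathcal{A}}-B_{2I,\mathcal{A}}\hat y_I-A_{2,\mathcal{A}}x\big)$$ and the critical region $$CR(\hat y_I,\mathcal{A})=\{x\in\mathbb{R}^{n_x}:\ A_2x+B_{2C}\,y_C^{\hat y_I,\mathcal{A}}(x)+B_{2I}\hat y_I\le b_2\}.$$ Consider the following iteration (Parametric Region Search), started from some $x_0\in\mathbb{R}^{n_x}$ and without an iteration cap. At iteration $k=0,1,2,\dots$: (1) compute an optimal solution $y_k=(y_{C,k},\hat y_{I,k})$ of the lower-level problem $\min_z\{d_2^\top z: A_2x_k+B_2z\le b_2\}$ at $x=x_k$ and record it; (2)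 if $x_k\in CR_i$ for some $i\in\{0,\dots,k-1\}$, stop; (3) otherwise choose an index set $\mathcal{A}_k$ with $|\mathcal{A}_k|=n_{yC}$, $B_{2C,\mathcal{A}_k}$ invertible, such that the constraints indexed by $\mathcal{A}_k$ are active at $(x_k,y_k)$ and $y_{C,k}=y_C^{\hat y_{I,k},\mathcal{A}_k}(x_k)$, and set $CR_k=CR(\hat y_{I,k},\mathcal{A}_k)$; (4) let $x_{k+1}$ be any point of $CR_k$ (in the method, a minimizer of the upper-level objective with $y$ replaced by $(y_C^{\hat y_{I,k},\mathcal{A}_k}(x),\hat y_{I,k})$ over $x\in CR_k$ subject to the upper-level constraints), and continue with $k+1$. Assume that at every iteration the lower-level problem at $x_k$ has an optimal solution, that an index set $\mathcal{A}_k$ as in (3) exists, and that the point $x_{k+1}$ in (4) exists. Then $x_k\in CR_k$ for each $k$ at which step (3) is executed, the generated critical regions correspond to pairwise distinct pairs $(\hat y_{I,k},\mathcal{A}_k)$, and consequently the iteration stops after at most $2^{n_{yI}}\binom{m_2}{n_{yC}}+1$ iterations.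
   Context: Notation: for a matrix $M$ and index set $\mathcal{A}$ of rows, $M_{\mathcal{A}}$ denotes the submatrix formed by the rows indexed by $\mathcal{A}$; similarly $b_{2,\mathcal{A}}$ is the subvector of $b_2$. A constraint $i$ of the lower level is active at $(x,z)$ if $(A_2x+B_2z)_i=(b_2)_i$. All inequalities between vectors are componentwise. The lower-level integer variables are assumed binary. *)

(* Defs.v *)
From HB Require Import structures.
From mathcomp Require Import all_boot all_order all_algebra.
Set Implicit Arguments. Unset Strict Implicit. Unset Printing Implicit Defensive.
Import Order.TTheory GRing.Theory Num.Theory.
Local Open Scope ring_scope.

Section PRS.
Variable R : realFieldType.

Definition mle (p q : nat) (u v : 'M[R]_(p, q)) : Prop :=
  forall i j, u i j <= v i j.

(* The row submatrix M_A, rows taken in increasing order of A, as a k x n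
   matrix (k will be |A|; if #|A| <> k it is the zero matrix, but all uses
   below require #|A| = k). *)
Definition rowsA (m n k : nat) (A : {set 'I_m}) (M : 'M[R]_(m, n)) : 'M[R]_(k, n) :=
  conform_mx (0 : 'M[R]_(k, n)) (rowsub (@enum_val _ (mem A)) M).

Variables (nx nC nI m2 : nat).
Variables (A2 : 'M[R]_(m2, nx)) (B2C : 'M[R]_(m2, nC)) (B2I : 'M[R]_(m2, nI))
          (b2 : 'cV[R]_m2) (d2C : 'cV[R]_nC) (d2I : 'cV[R]_nI).

Definition binary (p : nat) (v : 'cV[R]_p) : Prop :=
  forall i, v i 0 = 0 \/ v i 0 = 1.

Definition ll_feasible (x : 'cV[R]_nx) (zC : 'cV[R]_nC) (zI : 'cV[R]_nI) : Prop :=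
  binary zI /\ mle (A2 *m x + B2C *m zC + B2I *m zI) b2.

Definition ll_obj (zC : 'cV[R]_nC) (zI : 'cV[R]_nI) : R :=
  (d2C^T *m zC + d2I^T *m zI) 0 0.

Definition ll_optimal (x : 'cV[R]_nx) (zC : 'cV[R]_nC) (zI : 'cV[R]_nI) : Prop :=
  ll_feasible x zC zI /\
  forall zC' zI', ll_feasible x zC' zI' -> ll_obj zC zI <= ll_obj zC' zI'.

Definition yCmap (yI : 'cV[R]_nI) (A : {set 'I_m2}) (x : 'cV[R]_nx) : 'cV[R]_nC :=
  invmx (rowsA nC A B2C) *m
    (rowsA nC A b2 - rowsA nC A B2I *m yI - rowsA nC A A2 *m x).

Definition inCR (yI : 'cV[R]_nI) (A : {set 'I_m2}) (x : 'cV[R]_nx) : Prop :=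
  mle (A2 *m x + B2C *m yCmap yI A x + B2I *m yI) b2.

Definition admissible (A : {set 'I_m2}) (x : 'cV[R]_nx)
    (yC : 'cV[R]_nC) (yI : 'cV[R]_nI) : Prop :=
  [/\ #|A| = nC,
      rowsA nC A B2C \in unitmx,
      (forall i, i \in A -> (A2 *m x + B2C *m yC + B2I *m yI) i 0 = b2 i 0)
    & yC = yCmap yI A x].

End PRS.

(* At iteration k the method does not stop at step (2) (so step (3) is executed):
   x_k lies in none of CR_0, ..., CR_{k-1}. *)
Definition continues (R : realFieldType) (nx nI m2 nC : nat)
    (A2 : 'M[R]_(m2, nx)) (B2C : 'M[R]_(m2, nC)) (B2I : 'M[R]_(m2, nI))
    (b2 : 'cV[R]_m2)
    (x : nat -> 'cV[R]_nx) (yI : nat -> 'cV[R]_nI) (Aset : nat -> {set 'I_m2})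
    (k : nat) : Prop :=
  forall i, (i < k)%N -> ~ inCR A2 B2C B2I b2 (yI i) (Aset i) (x k).

(* Main.v *)
From Stdlib Require Import Classical.
Require Import Defs.
From HB Require Import structures.
From mathcomp Require Import all_boot all_order all_algebra.
Import Order.TTheory GRing.Theory Num.Theory.
Local Open Scope ring_scope.

Lemma bin_eq (R : realFieldType) p (u v : 'cV[R]_p) : binary u -> binary v ->
  [ffun i => u i 0 == 1] = [ffun i => v i 0 == 1] -> u = v.
Proof.
move=> bu bv /ffunP E; apply/matrixP => i j; rewrite (ord1 j).
have := E i; rewrite !ffunE.
by case: (bu i) => ->; case: (bv i) => -> //; rewrite ?eqxx ?(eq_sym (0:R) 1) oner_eq0.
Qed.

Theorem mainTheorem1 (R : realFieldType) (nx nC nI m2 : nat)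
  (A2 : 'M[R]_(m2, nx)) (B2C : 'M[R]_(m2, nC)) (B2I : 'M[R]_(m2, nI))
  (b2 : 'cV[R]_m2) (d2C : 'cV[R]_nC) (d2I : 'cV[R]_nI)
  (x : nat -> 'cV[R]_nx) (yC : nat -> 'cV[R]_nC) (yI : nat -> 'cV[R]_nI)
  (Aset : nat -> {set 'I_m2}) :
  (* step (1): y_k is an optimal lower-level solution at x_k, whenever
     iteration k is reached *)
  (forall k, (forall j, (j < k)%N -> continues A2 B2C B2I b2 x yI Aset j) ->
     ll_optimal A2 B2C B2I b2 d2C d2I (x k) (yC k) (yI k)) ->
  (* step (3): A_k is admissible whenever step (3) is executed at k *)
  (forall k, (forall j, (j <= k)%N -> continues A2 B2C B2I b2 x yI Aset j) ->
     admissible A2 B2C B2I b2 (Aset k) (x k) (yC k) (yI k)) ->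
  (* step (4): x_{k+1} \in CR_k whenever step (3) is executed at k *)
  (forall k, (forall j, (j <= k)%N -> continues A2 B2C B2I b2 x yI Aset j) ->
     inCR A2 B2C B2I b2 (yI k) (Aset k) (x k.+1)) ->
  [/\ (* x_k \in CR_k whenever step (3) is executed at k *)
      (forall k, (forall j, (j <= k)%N -> continues A2 B2C B2I b2 x yI Aset j) ->
         inCR A2 B2C B2I b2 (yI k) (Aset k) (x k)),
      (* the pairs (yI_k, A_k) of generated regions are pairwise distinct *)
      (forall i j, (i < j)%N ->
         (forall l, (l <= j)%N -> continues A2 B2C B2I b2 x yI Aset l) ->
         (yI i, Aset i) <> (yI j, Aset j))
    & (* the method stops at step (2) of some iteration K, i.e. after
         K+1 <= 2^nI * C(m2, nC) + 1 iterations *)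
      exists K : nat, (K.+1 <= 2 ^ nI * 'C(m2, nC) + 1)%N /\
        (forall j, (j < K)%N -> continues A2 B2C B2I b2 x yI Aset j) /\
        ~ continues A2 B2C B2I b2 x yI Aset K].
Proof.
move=> H1 H3 H4.
have P1 : forall k, (forall j, (j <= k)%N -> continues A2 B2C B2I b2 x yI Aset j) ->
         inCR A2 B2C B2I b2 (yI k) (Aset k) (x k).
  move=> k Hc; have [_ _ _ Eyc] := H3 k Hc.
  rewrite /inCR -Eyc.
  have [[_ Hf] _] := H1 k (fun j hj => Hc j (ltnW hj)).
  exact: Hf.
have P2 : forall i j, (i < j)%N ->
         (forall l, (l <= j)%N -> continues A2 B2C B2I b2 x yI Aset l) ->
         (yI i, Aset i) <> (yI j, Aset j).
  move=> i j ij Hc [E1 E2].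
  apply: (Hc j (leqnn j) i ij); rewrite E1 E2; exact: P1 j Hc.
split => //.
have gen : forall n, (forall j, (j < n)%N -> continues A2 B2C B2I b2 x yI Aset j) \/
   exists K, (K < n)%N /\ (forall j, (j < K)%N -> continues A2 B2C B2I b2 x yI Aset j) /\
        ~ continues A2 B2C B2I b2 x yI Aset K.
  elim=> [|n [IH|IH]]; first by left.
  - case: (classic (continues A2 B2C B2I b2 x yI Aset n)) => Hn.
      by left => j; rewrite ltnS leq_eqVlt => /orP [/eqP -> //|]; apply: IH.
    by right; exists n; split.
  - by right; case: IH => K [? ?]; exists K; split => //; apply: ltnW.
case: (gen (2 ^ nI * 'C(m2, nC)).+1) => [Hall|[K [HK ?]]]; last first.
  by exists K; rewrite addn1.
exfalso.
pose f := fun k : 'I_(2 ^ nI * 'C(m2, nC)).+1 =>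
  ([ffun i => yI k i 0 == 1], Aset k).
have Hb : forall k : 'I_(2 ^ nI * 'C(m2, nC)).+1, binary (yI k).
  move=> k; have [[Hb _] _] := H1 k (fun j hj => Hall j (ltn_trans hj (ltn_ord k))).
  exact: Hb.
have Hc : forall k : 'I_(2 ^ nI * 'C(m2, nC)).+1, #|Aset k| = nC.
  move=> k; by have [] := H3 k (fun j hj => Hall j (leq_ltn_trans hj (ltn_ord k))).
have finj : injective f.
  move=> k1 k2 [E1 E2]; apply: val_inj => /=.
  wlog h : k1 k2 E1 E2 / (k1 < k2)%N.
    move=> W; case: (ltngtP k1 k2) => h; first exact: W.
      by apply/esym; apply: W.
    by [].
  exfalso; apply: (P2 k1 k2 h (fun l hl => Hall l (leq_ltn_trans hl (ltn_ord k2)))).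
  by congr pair; [apply: bin_eq E1|].
have : (#|f @: [set: 'I_(2 ^ nI * 'C(m2, nC)).+1]| <=
   #|setX [set: {ffun 'I_nI -> bool}] [set A : {set 'I_m2} | #|A| == nC]|)%N.
  apply: subset_leq_card; apply/subsetP => p /imsetP [k _ ->].
  by rewrite !inE /= Hc eqxx.
rewrite card_imset // cardsX cardsT card_ffun card_bool card_ord card_draws card_ord.
rewrite cardsT card_ord ltnn.
move=> h; discriminate h.
Qed.
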